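(* Let $\lambda$ be a nonzero real number and let $r\ge 1$ be an integer. Then, as formal power series in $t$, $$-\frac{\log_{\lambda}(1-t)}{(1-t)^{r}}=\sum_{n=1}^{\infty}H_{n,\lambda}^{(r)}t^{n},$$ and $H_{0,\lambda}^{(r)}=0$.
   Context: For real $x$ and integer $k\ge0$: $(x)_{0,\lambda}=1$, $(x)_{k,\lambda}=x(x-\lambda)(x-2\lambda)\cdots(x-(k-1)\lambda)$ for $k\ge1$ (so $(1)_{k,1/\lambda}$ denotes this product with step $1/\lambda$). The degenerate logarithm is the formal power series $\log_{\lambda}(1+t)=\sum_{k=1}^{\infty}\lambda^{k-1}(1)_{k,1/\lambda}\frac{t^{k}}{k!}$ (equivalently $\log_\lambda(1+t)=((1+t)^\lambda-1)/\lambda$); it is the compositional inverse of the degenerate exponential $e_\lambda(t)=\sum_{k\ge0}(1)_{k,\lambda}t^k/k!=(1+\lambda t)^{1/\lambda}$. The degenerate harmonic numbers are $H_{0,\lambda}=0$ and $H_{n,\lambda}=\sum_{k=1}^{n}\frac{1}{\lambda}\binom{\lambda}{k}(-1)^{k-1}$ for $n\ge1$. The degenerate hyperharmonic numbers are defined by $H_{n,\lambda}^{(1)}=H_{n,\lambda}$ and $H_{n,\lambda}^{(r)}=\sum_{k=1}^{n}H_{k,\lambda}^{(r-1)}$ for $r\ge2$ (so $H^{(r)}_{0,\lambda}$ is an empty sum for $r\ge 2$). *)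

(* Defs.v *)
From HB Require Import structures.
From mathcomp Require Import all_boot all_order all_algebra.
Set Implicit Arguments. Unset Strict Implicit. Unset Printing Implicit Defensive.
Import Order.TTheory GRing.Theory Num.Theory.
Local Open Scope ring_scope.

Section FPS.
Variable R : fieldType.

Definition fps := nat -> R.

Definition fps_opp (a : fps) : fps := fun n => - a n.
Definition fps_mul (a b : fps) : fps :=
  fun n => \sum_(k < n.+1) a k * b (n - k)%N.
Definition fps_one : fps := fun n => if n == 0%N then 1 else 0.
Definition fps_pow (a : fps) (r : nat) : fps := iter r (fps_mul a) fps_one.
Definition fps_one_minus_t : fps :=
  fun n => if n == 0%N then 1 else if n == 1%N then -1 else 0.
Definition fps_neg_arg (a : fps) : fps := fun n => (-1) ^+ n * a n.

Fixpoint fps_inv_aux (a : fps) (n : nat) : seq R :=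
  match n with
  | 0 => [:: (a 0%N)^-1]
  | n'.+1 => let s := fps_inv_aux a n' in
             rcons s (- (a 0%N)^-1 *
                      \sum_(1 <= k < n'.+2) a k * nth 0 s (n'.+1 - k)%N)
  end.
Definition fps_inv (a : fps) : fps := fun n => nth 0 (fps_inv_aux a n) n.

Definition dfalling (x lam : R) (k : nat) : R := \prod_(i < k) (x - i%:R * lam).

(* coefficients of the degenerate logarithm log_lam(1+t) *)
Definition dlog (lam : R) : fps :=
  fun k => if k is 0 then 0
           else lam ^+ k.-1 * dfalling 1 lam^-1 k / (k`!)%:R.

Definition gbinom (x : R) (k : nat) : R := dfalling x 1 k / (k`!)%:R.

Definition dharm (lam : R) (n : nat) : R :=
  \sum_(1 <= k < n.+1) lam^-1 * gbinom lam k * (-1) ^+ k.-1.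

(* hyp lam r' n = H^{(r'+1)}_{n,lam} *)
Fixpoint hyp (lam : R) (r' : nat) (n : nat) : R :=
  match r' with
  | 0 => dharm lam n
  | r''.+1 => \sum_(1 <= k < n.+1) hyp lam r'' k
  end.
(* degenerate hyperharmonic numbers H^{(r)}_{n,lam}, meaningful for r >= 1 *)
Definition dhyperharm (lam : R) (r n : nat) : R := hyp lam r.-1 n.

End FPS.
Arguments fps_one {R}.
Arguments fps_one_minus_t {R}.

(* Main.v *)
Require Import Defs.
From HB Require Import structures.
From mathcomp Require Import all_boot all_order all_algebra.
From mathcomp Require Import ring.
Import Order.TTheory GRing.Theory Num.Theory.
Local Open Scope ring_scope.
Set Implicit Arguments. Unset Strict Implicit.

Section Aux.
Variable R : fieldType.

Definition Sps (a : fps R) : fps R := fun n => \sum_(i < n.+1) a i.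

Lemma mulE (a b : fps R) (p q : {poly R}) N k :
  (forall i, (i < N)%N -> p`_i = a i) -> (forall i, (i < N)%N -> q`_i = b i) ->
  (k < N)%N -> fps_mul a b k = (p * q)`_k.
Proof.
move=> Hp Hq kN; rewrite coefM /fps_mul; apply: eq_bigr => [[i Hi]] _ /=.
rewrite Hp ?Hq //.
  by apply: leq_ltn_trans kN; apply: leq_subr.
by apply: leq_ltn_trans kN.
Qed.

Lemma powE (a : fps R) (p : {poly R}) N :
  (forall i, (i < N)%N -> p`_i = a i) ->
  forall r k, (k < N)%N -> fps_pow a r k = (p ^+ r)`_k.
Proof.
move=> Hp; elim=> [|r IH] k kN.
  by rewrite /fps_pow /= /fps_one coef1; case: k kN.
rewrite exprS.
change (fps_mul a (fps_pow a r) k = (p * p ^+ r)`_k).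
by apply: (mulE Hp) => // i iN; rewrite IH.
Qed.

Lemma inv_aux_nth (c : fps R) m j : (j <= m)%N ->
  nth 0 (fps_inv_aux c m) j = fps_inv c j.
Proof.
elim: m j => [|m IH] j.
  by rewrite leqn0 => /eqP ->.
have Hs : size (fps_inv_aux c m) = m.+1.
  by elim: (m) => [|m' IHm] //=; rewrite size_rcons IHm.
rewrite leq_eqVlt; case/orP => [/eqP -> //|jm].
by rewrite /= nth_rcons Hs jm IH.
Qed.

Lemma invS (c : fps R) m : fps_inv c m.+1 =
  - (c 0%N)^-1 * \sum_(1 <= k < m.+2) c k * fps_inv c (m.+1 - k)%N.
Proof.
have Hs : size (fps_inv_aux c m) = m.+1.
  by elim: (m) => [|m' IHm] //=; rewrite size_rcons IHm.
rewrite {1}/fps_inv /= nth_rcons Hs ltnn eqxx; congr (_ * _).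
apply: eq_big_nat => k /andP [k1 k2]; rewrite inv_aux_nth //.
by case: k k1 k2 => // k _ _; rewrite subSS leq_subr.
Qed.

Lemma sum1 (f : nat -> R) n : f 0%N = 0 ->
  \sum_(1 <= k < n.+1) f k = \sum_(i < n.+1) f i.
Proof. by move=> f0; rewrite -(big_mkord xpredT) (@big_ltn _ _ _ 0) // f0 add0r. Qed.

Lemma inv_unique (c x : fps R) : c 0%N != 0 ->
  (forall m, fps_mul c x m = fps_one m) -> forall m, fps_inv c m = x m.
Proof.
move=> c0 H m; elim: m {-2}m (leqnn m) => [|m IH] j.
  rewrite leqn0 => /eqP ->.
  have := H 0%N; rewrite /fps_mul big_ord1 /fps_one /= => e.
  rewrite /fps_inv /=; apply: (mulfI c0); rewrite e mulfV //.
rewrite leq_eqVlt; case/orP => [/eqP ->|jm]; last by apply: IH.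
have := H m.+1; rewrite /fps_mul big_ord_recl /fps_one /= subn0 => e.
have e' : c 0%N * x m.+1 + \sum_(0 <= i < m.+1) c i.+1 * x (m - i)%N = 0.
  rewrite -[RHS]e big_mkord; congr (_ + _); by apply: eq_bigr => i _.
rewrite invS big_add1 /=.
have -> : \sum_(0 <= k < m.+1) c k.+1 * fps_inv c (m.+1 - k.+1)%N =
          \sum_(0 <= i < m.+1) c i.+1 * x (m - i)%N.
  apply: eq_big_nat => i /andP [_ im]; rewrite subSS IH //.
  by rewrite leq_subr.
have -> : \sum_(0 <= i < m.+1) c i.+1 * x (m - i)%N = - (c 0%N * x m.+1).
  by apply/eqP; rewrite -addr_eq0 addrC e'.
by rewrite mulrN mulNr opprK mulrA mulVf // mul1r.
Qed.

Lemma iterSE (A : fps R) (PA q : {poly R}) N :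
  (forall i, (i < N)%N -> PA`_i = A i) -> (forall i, (i < N)%N -> q`_i = 1) ->
  forall j k, (k < N)%N -> iter j Sps A k = (PA * q ^+ j)`_k.
Proof.
move=> HA Hq; elim=> [|j IH] k kN.
  by rewrite expr0 mulr1 /= HA.
rewrite /= /Sps exprSr mulrA coefM; apply: eq_bigr => [[i Hi]] _ /=.
rewrite Hq ?mulr1 ?IH //.
  by apply: leq_ltn_trans kN.
by apply: leq_ltn_trans kN; apply: leq_subr.
Qed.

Lemma iterS0 (A : fps R) j : A 0%N = 0 -> iter j Sps A 0%N = 0.
Proof. by move=> A0; elim: j => [|j IH] //=; rewrite /Sps big_ord1. Qed.

Lemma Aterm_lem (lam : R) k : lam != 0 -> (1 <= k)%N ->
    lam^-1 * gbinom lam k * (-1) ^+ k.-1 = fps_opp (fps_neg_arg (dlog lam)) k.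
Proof.
move=> hlam; case: k => // k _; rewrite /fps_opp /fps_neg_arg /dlog /gbinom /=.
have key : lam ^+ k * dfalling 1 lam^-1 k.+1 = lam^-1 * dfalling lam 1 k.+1.
  apply: (mulfI hlam); rewrite mulrA -exprS mulrA mulfV // mul1r.
  have -> : lam ^+ k.+1 = \prod_(i < k.+1) lam by rewrite prodr_const card_ord.
  rewrite /dfalling -big_split /=.
  apply: eq_bigr => i _; by rewrite mulrBr mulrCA mulfV // !mulr1.
rewrite key exprS; ring.
Qed.

Lemma main_fps (A : fps R) r n : A 0%N = 0 ->
  fps_mul A (fps_inv (fps_pow fps_one_minus_t r)) n = iter r Sps A n.
Proof.
move=> A0.
set N := n.+1.
set q : {poly R} := \poly_(i < N) 1.
have Hq : forall i, (i < N)%N -> q`_i = 1 by move=> i iN; rewrite coef_poly iN.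
have Hpt : forall i, (i < N)%N -> (1 - 'X : {poly R})`_i = fps_one_minus_t i.
  move=> i _; rewrite coefB coef1 coefX /fps_one_minus_t.
  by case: i => [|[|i]] //=; rewrite ?subr0 ?sub0r.
have Hones : forall i, (i < N)%N -> q`_i = (fun _ : nat => (1 : R)) i by [].
have Binv : forall m, fps_inv (fps_pow fps_one_minus_t r) m =
                      fps_pow (fun _ => (1 : R)) r m.
  apply: inv_unique.
    have -> : forall (f : fps R) r, f 0%N = 1 -> fps_pow f r 0%N = 1.
      by move=> f; elim=> [|r' IH] f0 //=; rewrite /fps_mul big_ord1 IH ?f0 ?mulr1.
    by rewrite oner_eq0.
    by [].
  move=> m.
  set M := m.+1.
  set q' : {poly R} := \poly_(i < M) 1.
  have Hq' : forall i, (i < M)%N -> q'`_i = (fun _ : nat => (1 : R)) i.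
    by move=> i iM; rewrite coef_poly iM.
  have Hpt' : forall i, (i < M)%N -> (1 - 'X : {poly R})`_i = fps_one_minus_t i.
    move=> i _; rewrite coefB coef1 coefX /fps_one_minus_t.
    by case: i => [|[|i]] //=; rewrite ?subr0 ?sub0r.
  have h1 : forall i : nat, (i < M)%N -> ((1 - 'X : {poly R}) ^+ r)`_i = fps_pow fps_one_minus_t r i.
    by move=> i iM; symmetry; apply: (powE Hpt').
  have h2 : forall i : nat, (i < M)%N -> (q' ^+ r)`_i = fps_pow (fun _ => (1 : R)) r i.
    by move=> i iM; symmetry; apply: (powE Hq').
  rewrite (mulE h1 h2) // -exprMn.
  have -> : (1 - 'X) * q' = 1 - 'X^M.
    rewrite -[in RHS](expr1n {poly R} M) (subrXX 1 'X M) /q' poly_def; congr (_ * _).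
    by apply: eq_bigr => i _; rewrite expr1n mul1r scale1r.
  have [v ->] : exists v : {poly R}, (1 - 'X^M) ^+ r = 1 + 'X^M * v.
    elim: (r) => [|r' [v IH]]; first by exists 0; rewrite mulr0 addr0.
    by exists (v - 1 - 'X^M * v); rewrite exprS IH; ring.
  rewrite coefD coefXnM ltnSn addr0 coef1 /fps_one; by case: (m == 0%N).
have hA : forall i : nat, (i < N)%N -> (\poly_(i < N) A i)`_i = A i.
  by move=> i iN; rewrite coef_poly iN.
have hB : forall i : nat, (i < N)%N ->
    (q ^+ r)`_i = fps_inv (fps_pow fps_one_minus_t r) i.
  by move=> i iN; rewrite Binv; symmetry; apply: (powE Hones).
rewrite (mulE hA hB); last exact: ltnSn.
symmetry; exact: (iterSE hA Hq).
Qed.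

End Aux.

Theorem theorem1 (R : realFieldType) (lam : R) (r : nat)
    (hlam : lam != 0) (hr : (1 <= r)%N) :
  (forall n : nat,
      fps_mul (fps_opp (fps_neg_arg (dlog lam)))
              (fps_inv (fps_pow fps_one_minus_t r)) n
      = if n == 0%N then 0 else dhyperharm lam r n)
  /\ dhyperharm lam r 0 = 0.
Proof.
set A := fps_opp (fps_neg_arg (dlog lam)).
have A0 : A 0%N = 0 by rewrite /A /fps_opp /fps_neg_arg /dlog mulr0 oppr0.
have hypE : forall r' n, hyp lam r' n = iter r'.+1 (@Sps R) A n.
  elim=> [|r' IH] n /=.
    rewrite /dharm /Sps -sum1 //.
    by apply: eq_big_nat => k /andP [k1 _]; rewrite Aterm_lem.
  change (\sum_(1 <= k < n.+1) hyp lam r' k = \sum_(i < n.+1) iter r'.+1 (@Sps R) A i).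
  rewrite -sum1; last by apply: iterS0.
  by apply: eq_big_nat => k _; rewrite IH.
have dhE : forall n, dhyperharm lam r n = iter r (@Sps R) A n.
  by move=> n; rewrite /dhyperharm hypE prednK.
split; last by rewrite dhE iterS0.
move=> n; rewrite main_fps //.
by case: eqP => [->|_]; rewrite ?iterS0 ?dhE.
Qed.
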